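(* Let $X_1$, $X_2$ be subcomplexes of a simplicial complex $X$ such that $X = X_1 \cup X_2$ and $\dim(X_1\cap X_2) = \dim(X)$. If $X_1$ and $X_2$ are both $q$-rigid, then $X$ is $q$-rigid. If, moreover (with $X_1$, $X_2$ both $q$-rigid), $X$ is minimally $q$-rigid, then both $X_1$ and $X_2$ are minimally $q$-rigid.
   Context: A simplicial complex is a finite set of finite sets closed under taking subsets; an element of size $i+1$ is an $i$-face; 1-faces are edges; $V(X)$ is the vertex set; the dimension is the maximal face dimension. $X$ is connected if its edge graph is connected. For a positive integer $q$, a $d$-dimensional simplicial complex $X$ is $q$-rigid if $X$ is connected and for every $A\subseteq V(X)$ disjoint from at least one $d$-face of $X$, the number of edges of $X$ meeting $A$ is at least $q\cdot\#(A)$. An $n$-vertex $d$-dimensional complex is minimally $q$-rigid if it is $q$-rigid and has exactly $(n-d-1)q+\binom{d+1}{2}$ edges. *)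

(* Defs.v *)
From mathcomp Require Import all_boot all_order all_algebra.
Set Implicit Arguments. Unset Strict Implicit. Unset Printing Implicit Defensive.

Section Complexes.
Variable T : finType.
Implicit Types (X : {set {set T}}) (A f : {set T}).

Definition simplicial_complex X : bool :=
  [forall f in X, forall g : {set T}, (g \subset f) ==> (g \in X)].

Definition vertices X : {set T} := \bigcup_(f in X) f.

Definition edges X : {set {set T}} := [set e in X | #|e| == 2].

Definition maxcard X : nat := \max_(f in X) #|f|.
Definition cx_dim X : int := (maxcard X)%:Z - 1.

Definition is_face_of_dim X (d : int) f : bool :=
  (f \in X) && (#|f|%:Z == d + 1)%R.

Definition edge_rel X : rel T := fun u v => (u != v) && ([set u; v] \in X).

Definition connected X : Prop :=
  forall u v, u \in vertices X -> v \in vertices X -> connect (edge_rel X) u v.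

Definition edges_meeting X A : nat := #|[set e in edges X | ~~ [disjoint e & A]]|.

Definition q_rigid (q : nat) X : Prop :=
  connected X /\
  forall A, A \subset vertices X ->
    (exists f, is_face_of_dim X (cx_dim X) f && [disjoint A & f]) ->
    q * #|A| <= edges_meeting X A.

Definition min_q_rigid (q : nat) X : Prop :=
  q_rigid q X /\
  (#|edges X|%:Z = (#|vertices X|%:Z - cx_dim X - 1) * q%:Z + ('C(maxcard X, 2))%:Z)%R.

End Complexes.

(* Main.v *)
Require Import Defs.
From mathcomp Require Import all_boot all_order all_algebra.
From mathcomp Require Import zify ring.
Set Implicit Arguments. Unset Strict Implicit. Unset Printing Implicit Defensive.
Import Order.TTheory GRing.Theory Num.Theory.

Section Aux.
Variable T : finType.
Implicit Types (X Y : {set {set T}}) (A B f g : {set T}).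

Lemma ndisjP A B : ~~ [disjoint A & B] -> exists2 x, x \in A & x \in B.
Proof.
by rewrite -setI_eq0 => /set0Pn [x]; rewrite inE => /andP[]; exists x.
Qed.

Lemma disjP A B : (forall x, x \in A -> x \in B -> False) -> [disjoint A & B].
Proof.
move=> H; apply/negPn/negP => /ndisjP [x] xA xB; exact: H xA xB.
Qed.

Lemma face_top X f : is_face_of_dim X (cx_dim X) f = (f \in X) && (#|f| == maxcard X).
Proof. by rewrite /is_face_of_dim /cx_dim subrK eqz_nat. Qed.

Lemma maxcard_ge X f : f \in X -> #|f| <= maxcard X.
Proof. by move=> fX; rewrite /maxcard (leq_bigmax_cond _ fX). Qed.

Lemma maxcard_sub X Y : X \subset Y -> maxcard X <= maxcard Y.
Proof.
move=> sXY; rewrite /maxcard; apply/bigmax_leqP => f fX.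
exact: maxcard_ge (subsetP sXY f fX).
Qed.

Lemma maxcard_ex X : 0 < maxcard X -> exists2 f, f \in X & #|f| = maxcard X.
Proof.
case: (set_0Vmem X) => [->|[f0 f0X]]; first by rewrite /maxcard big_set0.
have : 0 < #|X| by apply/card_gt0P; exists f0.
move=> /(eq_bigmax_cond (fun f => #|f|)) [f fX e] _; exists f => //; rewrite /maxcard e.
Qed.

Lemma vert_sub X f : f \in X -> f \subset vertices X.
Proof. by move=> fX; apply: bigcup_sup. Qed.

Lemma vert_mono X Y : X \subset Y -> vertices X \subset vertices Y.
Proof.
move=> sXY; apply/bigcupsP => f fX; apply: vert_sub; exact: subsetP sXY f fX.
Qed.

Lemma vertU X Y : vertices (X :|: Y) = vertices X :|: vertices Y.
Proof. by rewrite /vertices bigcup_setU. Qed.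

Lemma edges_sub_vert X e : e \in edges X -> e \subset vertices X.
Proof. by rewrite inE => /andP[eX _]; apply: vert_sub. Qed.

Lemma edges_mono X Y : X \subset Y -> edges X \subset edges Y.
Proof.
move=> sXY; apply/subsetP => e; rewrite !inE => /andP[eX ->].
by rewrite (subsetP sXY e eX).
Qed.

Lemma connect_mono X Y u v : X \subset Y -> connect (edge_rel X) u v ->
  connect (edge_rel Y) u v.
Proof.
move=> sXY; apply: connect_sub => x y /andP[xy e]; apply: connect1.
by rewrite /edge_rel xy (subsetP sXY _ e).
Qed.

Lemma edges_lb X q g : simplicial_complex X ->
  (forall A, A \subset vertices X ->
    (exists f, is_face_of_dim X (cx_dim X) f && [disjoint A & f]) ->
    q * #|A| <= edges_meeting X A) ->
  g \in X -> #|g| = maxcard X ->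
  (#|vertices X| - #|g|) * q + 'C(#|g|, 2) <= #|edges X|.
Proof.
move=> sc rig gX gm.
set A := vertices X :\: g.
have gV := vert_sub gX.
have cA : #|A| = #|vertices X| - #|g|.
  by rewrite /A cardsD (setIidPr gV).
have dA : [disjoint A & g] by apply: disjP => x; rewrite inE => /andP[/negP].
have h1 : q * #|A| <= edges_meeting X A.
  apply: rig; first exact: subsetDl.
  by exists g; rewrite face_top gX gm eqxx.
set S := [set e in edges X | ~~ [disjoint e & A]].
set Eg := [set e : {set T} | e \subset g & #|e| == 2].
have cEg : #|Eg| = 'C(#|g|, 2) by rewrite cards_draws.
have sU : S :|: Eg \subset edges X.
  apply/subsetP => e; rewrite !inE => /orP[/andP[->//]|/andP[eg e2]].
  move/forallP: sc => /(_ g) /implyP /(_ gX) /forallP /(_ e) /implyP /(_ eg) ->.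
  by [].
have dI : S :&: Eg = set0.
  apply/setP => e; rewrite !inE; apply/negP => /andP[/andP[_ /ndisjP [x xe xA]]].
  move=> /andP[eg _]; move: xA; rewrite inE (subsetP eg x xe); by [].
have := cardsUI S Eg; rewrite dI cards0 addn0 => cU.
have := subset_leq_card sU; rewrite cU cEg -cA mulnC.
rewrite /edges_meeting -/S in h1; lia.
Qed.

Lemma half X Y1 Y2 q g f A m :
  X = Y1 :|: Y2 -> maxcard Y1 = m -> maxcard Y2 = m ->
  (forall A, A \subset vertices Y1 ->
    (exists f, is_face_of_dim Y1 (cx_dim Y1) f && [disjoint A & f]) ->
    q * #|A| <= edges_meeting Y1 A) ->
  (forall A, A \subset vertices Y2 ->
    (exists f, is_face_of_dim Y2 (cx_dim Y2) f && [disjoint A & f]) ->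
    q * #|A| <= edges_meeting Y2 A) ->
  g \in Y1 -> g \in Y2 -> #|g| = m -> f \in Y1 -> #|f| = m ->
  A \subset vertices X -> [disjoint A & f] ->
  q * #|A| <= edges_meeting X A.
Proof.
move=> eX m1 m2 r1 r2 g1 g2 gm f1 fm sA dA.
set A1 := A :&: vertices Y1; set B := A :\: vertices Y1.
have h1 : q * #|A1| <= edges_meeting Y1 A1.
  apply: r1; first exact: subsetIr.
  exists f; rewrite face_top f1 fm m1 eqxx /=.
  exact: disjointWl (subsetIl _ _) dA.
have h2 : q * #|B| <= edges_meeting Y2 B.
  apply: r2.
    apply/subsetP => x; rewrite inE => /andP[xn xA].
    move: (subsetP sA x xA); rewrite eX vertU inE (negbTE xn) //.
  exists g; rewrite face_top g2 gm m2 eqxx /=.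
  apply: disjP => x; rewrite inE => /andP[xn _] xg.
  by move: xn; rewrite (subsetP (vert_sub g1) x xg).
set S1 := [set e in edges Y1 | ~~ [disjoint e & A1]].
set S2 := [set e in edges Y2 | ~~ [disjoint e & B]].
have sU : S1 :|: S2 \subset [set e in edges X | ~~ [disjoint e & A]].
  apply/subsetP => e; rewrite !inE => /orP[]/andP[eE /ndisjP[x xe xa]].
    have eE' : e \in edges Y1 by rewrite inE.
    have s : Y1 \subset X by rewrite eX subsetUl.
    apply/andP; split; first by have := subsetP (edges_mono s) e eE'; rewrite inE.
    apply/negP => /disjointFr /(_ xe); move: xa; rewrite inE => /andP[-> _]; by [].
  have eE' : e \in edges Y2 by rewrite inE.
  have s : Y2 \subset X by rewrite eX subsetUr.
  apply/andP; split; first by have := subsetP (edges_mono s) e eE'; rewrite inE.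
  apply/negP => /disjointFr /(_ xe); move: xa; rewrite inE => /andP[_ ->]; by [].
have dI : S1 :&: S2 = set0.
  apply/setP => e; rewrite !inE; apply/negP => /andP[/andP[eE1 _]].
  have {}eE1 : e \in edges Y1 by rewrite inE.
  move=> /andP[_ /ndisjP[x xe]]; rewrite inE (subsetP (edges_sub_vert eE1) x xe).
  by [].
have := cardsUI S1 S2; rewrite dI cards0 addn0 => cU.
have := subset_leq_card sU; rewrite cU.
have := cardsID (vertices Y1) A; rewrite -/A1 -/B => cA.
rewrite /edges_meeting -/S1 in h1; rewrite /edges_meeting -/S2 in h2; rewrite /edges_meeting; nia.
Qed.

End Aux.

Theorem lemma6p5 (T : finType) (X X1 X2 : {set {set T}}) (q : nat) :
  0 < q ->
  simplicial_complex X -> simplicial_complex X1 -> simplicial_complex X2 ->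
  X = X1 :|: X2 ->
  cx_dim (X1 :&: X2) = cx_dim X ->
  q_rigid q X1 -> q_rigid q X2 ->
  q_rigid q X /\ (min_q_rigid q X -> min_q_rigid q X1 /\ min_q_rigid q X2).
Proof.
move=> q0 sc sc1 sc2 eX dI [c1 r1] [c2 r2].
set m := maxcard X.
have mI : maxcard (X1 :&: X2) = m.
  by move: dI; rewrite /cx_dim => /eqP; rewrite (inj_eq (addIr _)) eqz_nat => /eqP.
have s1 : X1 \subset X by rewrite eX subsetUl.
have s2 : X2 \subset X by rewrite eX subsetUr.
have m1 : maxcard X1 = m.
  apply/eqP; rewrite eqn_leq maxcard_sub //= -mI maxcard_sub //; exact: subsetIl.
have m2 : maxcard X2 = m.
  apply/eqP; rewrite eqn_leq maxcard_sub //= -mI maxcard_sub //; exact: subsetIr.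
case: (posnP m) => [m0 | mpos].
  have vE (Y : {set {set T}}) : Y \subset X -> vertices Y = set0.
    move=> sY; apply/setP => x; rewrite inE; apply/negP => /bigcupP[f fY xf].
    have := maxcard_ge (subsetP sY f fY); rewrite -/m m0 leqn0 cards_eq0 => /eqP f0.
    by move: xf; rewrite f0 inE.
  have eE (Y : {set {set T}}) : Y \subset X -> edges Y = set0.
    move=> sY; apply/setP => e; rewrite !inE; apply/negP => /andP[eY /eqP e2].
    by have := maxcard_ge (subsetP sY e eY); rewrite -/m m0 e2.
  have rig : q_rigid q X.
    split; first by move=> u v; rewrite vE // inE.
    by move=> A; rewrite vE // subset0 => /eqP -> _; rewrite cards0 muln0.
  split=> // _; split; split.
  - by split=> //.
  - by rewrite eE // vE // !cards0 /cx_dim m1 m0 bin_small //; ring.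
  - by split=> //.
  - by rewrite eE // vE // !cards0 /cx_dim m2 m0 bin_small //; ring.
have [g gI gm] : exists2 g, g \in X1 :&: X2 & #|g| = m.
  by rewrite -mI; apply: maxcard_ex; rewrite mI.
move: gI; rewrite inE => /andP[g1 g2].
have rigX : q_rigid q X.
  split.
    have [w wg] : exists w, w \in g by apply/set0Pn; rewrite -card_gt0 gm.
    have w1 : w \in vertices X1 by exact: subsetP (vert_sub g1) w wg.
    have w2 : w \in vertices X2 by exact: subsetP (vert_sub g2) w wg.
    move=> u v uV vV; rewrite eX vertU in uV vV.
    rewrite in_setU in uV; rewrite in_setU in vV.
    have cuw : connect (edge_rel X) u w.
      by case/orP: uV => uV; [apply: connect_mono s1 _; apply: c1|
                              apply: connect_mono s2 _; apply: c2].
    apply: connect_trans cuw _.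
    by case/orP: vV => vV; [apply: connect_mono s1 _; apply: c1|
                            apply: connect_mono s2 _; apply: c2].
  move=> A sA [f /andP[]]; rewrite face_top => /andP[fX /eqP fm] dA.
  have : f \in X1 :|: X2 by rewrite -eX.
  rewrite inE => /orP[fY|fY].
    exact: (half eX m1 m2 r1 r2 g1 g2 gm fY fm sA dA).
  rewrite setUC in eX.
  exact: (half eX m2 m1 r2 r1 g2 g1 gm fY fm sA dA).
split=> // -[_ eqX].
have lb1 := edges_lb sc1 r1 g1 (etrans gm (esym m1)).
have lb2 := edges_lb sc2 r2 g2 (etrans gm (esym m2)).
have gv1 : #|g| <= #|vertices X1| by apply: subset_leq_card; apply: vert_sub.
have gv2 : #|g| <= #|vertices X2| by apply: subset_leq_card; apply: vert_sub.
have vX1 : vertices X1 \subset vertices X by apply: vert_mono.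
have vX2 : vertices X2 \subset vertices X by apply: vert_mono.
have nv1 := subset_leq_card vX1.
have nv2 := subset_leq_card vX2.
have key : forall Y Z : {set {set T}}, X = Y :|: Z -> maxcard Z = m -> g \in Y -> g \in Z ->
    (forall A : {set T}, A \subset vertices Z ->
    (exists f, is_face_of_dim Z (cx_dim Z) f && [disjoint A & f]) ->
    q * #|A| <= edges_meeting Z A) ->
    #|edges Y| + q * (#|vertices X| - #|vertices Y|) <= #|edges X|.
  move=> Y Z eYZ mZ gY gZ rZ.
  set B := vertices X :\: vertices Y.
  have vYX : vertices Y \subset vertices X by apply: vert_mono; rewrite eYZ subsetUl.
  have cB : #|B| = #|vertices X| - #|vertices Y| by rewrite cardsD (setIidPr vYX).
  have h : q * #|B| <= edges_meeting Z B.
    apply: rZ.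
      apply/subsetP => x; rewrite inE => /andP[xn xA].
      by move: xA; rewrite eYZ vertU inE (negbTE xn).
    exists g; rewrite face_top gZ gm mZ eqxx /=.
    apply: disjP => x; rewrite inE => /andP[xn _] xg.
    by move: xn; rewrite (subsetP (vert_sub gY) x xg).
  set S := [set e in edges Z | ~~ [disjoint e & B]].
  have sU : edges Y :|: S \subset edges X.
    have sY : Y \subset X by rewrite eYZ subsetUl.
    have sZ : Z \subset X by rewrite eYZ subsetUr.
    apply/subsetP => e; rewrite in_setU => /orP[eE|].
      exact: (subsetP (edges_mono sY) e eE).
    rewrite in_set => /andP[eE _]; exact: (subsetP (edges_mono sZ) e eE).
  have dI0 : edges Y :&: S = set0.
    apply/setP => e; rewrite in_setI in_set0; apply/negP => /andP[eE1].
    rewrite in_set => /andP[_ /ndisjP[x xe]].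
    by rewrite inE (subsetP (edges_sub_vert eE1) x xe).
  have := cardsUI (edges Y) S; rewrite dI0 cards0 addn0 => cU.
  have := subset_leq_card sU; rewrite cU -cB.
  rewrite /edges_meeting -/S in h; move=> H; apply: leq_trans H; by rewrite leq_add2l h.
have k1 := key X1 X2 eX m2 g1 g2 r2.
have k2 := key X2 X1 (etrans eX (setUC _ _)) m1 g2 g1 r1.
have gvX : #|g| <= #|vertices X| by exact: leq_trans gv1 nv1.
have conv : forall (E n : nat), m <= n ->
   ((E%:Z = (n%:Z - cx_dim X - 1) * q%:Z + ('C(m, 2))%:Z)%R <->
    E = (n - m) * q + 'C(m, 2)).
  move=> E n mn.
  have -> : (n%:Z - cx_dim X - 1 = (n - m)%:Z)%R.
    by rewrite /cx_dim -/m -subzn //; ring.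
  by rewrite -PoszM -PoszD; split=> [[->]|->].
have mX : m <= #|vertices X| by rewrite -gm.
have eqN := (conv _ _ mX).1 eqX.
clear eqX.
rewrite gm in lb1 lb2 gv1 gv2.
have e1 : #|edges X1| = (#|vertices X1| - m) * q + 'C(m, 2).
  set a := #|vertices X1| - m in lb1 *.
  have : #|vertices X| - m = (#|vertices X| - #|vertices X1|) + a by rewrite /a; lia.
  move=> hh; rewrite hh mulnDl in eqN; rewrite mulnC in k1; lia.
have e2 : #|edges X2| = (#|vertices X2| - m) * q + 'C(m, 2).
  set a := #|vertices X2| - m in lb2 *.
  have : #|vertices X| - m = (#|vertices X| - #|vertices X2|) + a by rewrite /a; lia.
  move=> hh; rewrite hh mulnDl in eqN; rewrite mulnC in k2; lia.
split; split; rewrite ?m1 ?m2 //.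
- have dd : cx_dim X1 = cx_dim X by rewrite /cx_dim m1.
  by rewrite dd; apply/(conv _ _ gv1).
- have dd : cx_dim X2 = cx_dim X by rewrite /cx_dim m2.
  by rewrite dd; apply/(conv _ _ gv2).
Qed.
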